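(* Let a regular network with adjacency matrix $A$ be given and let $\mathcal{L}$ be the lattice of all its synchrony subspaces. Every join-irreducible element $S$ of $\mathcal{L}$ is the smallest synchrony subspace containing some special Jordan subspace to the network. Consequently, the cardinality of the set of join-irreducible elements of $\mathcal{L}$ does not exceed the cardinality of the set of special Jordan subspaces to the network.
   Context: A regular network is a finite directed graph on cells $1,\dots,n$ (loops and multiple arrows allowed) in which every cell receives the same number $v$ of arrows (the valency). Its adjacency matrix $A=[a_{ij}]$ has $a_{ij}$ equal to the number of arrows cell $i$ receives from cell $j$; every row sum is $v$. $A$ acts on $\mathbb{C}^n$. A polydiagonal is a subspace of $\mathbb{C}^n$ of the form $\{x : x_i=x_j \text{ for all } (i,j)\in R\}$ for some (possibly empty) set $R$ of index pairs. A synchrony subspace is a polydiagonal invariant under $A$. The synchrony subspaces, ordered by inclusion, form a complete lattice $\mathcal{L}$: the meet is intersection and the join of $S_1,S_2$ is the smallest synchrony subspace containing $S_1+S_2$. An element $S\in\mathcal{L}$ is join-irreducible if it cannot be written as the join of two elements of $\mathcal{L}$ both different from $S$. $F=\{x_1=\cdots=x_n\}$ is the fully synchrony subspace. $P(W)$ is the smallest polydiagonal containing a subspace $W$. For an eigenvalue $\lambda$ of $A$, the generalized eigenspace is $G_\lambda=\operatorname{Ker}(A-\lambda I)^p$ for $p$ large. A Jordan chain of length $k$ for $\lambda$ is a sequence of nonzero vectors $x_1,\dots,x_k$ with $(A-\lambda I)x_1=0$ and $(A-\lambda I)x_i=x_{i-1}$ for $2\le i\le k$; a Jordan subspace is the span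 of a Jordan chain. A Jordan subspace $W$ of a generalized eigenspace $G$ is a special Jordan subspace to the network if for every Jordan subspace $U$ of $G$ with $\dim U=\dim W$ and $P(U)\subseteq P(W)$, either $P(U)=P(W)$ or $U=F$. *)

(* Defs.v *)
(* Vectors of C^n are represented as row vectors 'rV[algC]_n,
   subspaces as row spaces of square matrices 'M[algC]_n (mxalgebra, %MS).
   The column action x |-> A x corresponds to r |-> r *m A^T on rows. *)
From HB Require Import structures.
From mathcomp Require Import all_boot all_order all_algebra all_field.
Set Implicit Arguments. Unset Strict Implicit. Unset Printing Implicit Defensive.
Import Order.TTheory GRing.Theory Num.Theory.
Local Open Scope ring_scope.

Section Net.
Variables (n : nat) (a : 'M[nat]_n).

(* adjacency matrix over C: a i j = number of arrows cell i receives from j *)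
Definition adjC : 'M[algC]_n := map_mx (fun k : nat => k%:R) a.

Definition actA : 'M[algC]_n := (adjC)^T.

Definition Fsub : 'M[algC]_n := <<(const_mx 1 : 'rV[algC]_n)>>%MS.

Definition is_polydiag (V : 'M[algC]_n) : Prop :=
  exists R : rel 'I_n, forall x : 'rV[algC]_n,
    (x <= V)%MS <-> (forall i j, R i j -> x 0 i = x 0 j).

Definition is_sync (V : 'M[algC]_n) : Prop :=
  is_polydiag V /\ (V *m actA <= V)%MS.

Definition smallest_sync (V S : 'M[algC]_n) : Prop :=
  [/\ is_sync S, (V <= S)%MS &
      forall T : 'M[algC]_n, is_sync T -> (V <= T)%MS -> (S <= T)%MS].

Definition is_P (W D : 'M[algC]_n) : Prop :=
  [/\ is_polydiag D, (W <= D)%MS &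
      forall D' : 'M[algC]_n, is_polydiag D' -> (W <= D')%MS -> (D <= D')%MS].

Definition join_irreducible (S : 'M[algC]_n) : Prop :=
  is_sync S /\
  ~ (exists S1 S2 : 'M[algC]_n,
       [/\ is_sync S1, is_sync S2, ~~ (S1 == S)%MS, ~~ (S2 == S)%MS &
           smallest_sync (S1 + S2)%MS S]).

Definition jordan_chain (lam : algC) (k : nat) (x : nat -> 'rV[algC]_n) : Prop :=
  [/\ (0 < k)%N,
      forall i, (i < k)%N -> x i != 0,
      x 0 *m (actA - lam%:M) = 0 &
      forall i, (0 < i < k)%N -> x i *m (actA - lam%:M) = x i.-1].

Definition jordan_sub (lam : algC) (W : 'M[algC]_n) : Prop :=
  exists (k : nat) (x : nat -> 'rV[algC]_n),
    jordan_chain lam k x /\ (W == \sum_(i < k) <<x i>>)%MS.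

Definition special_jordan (W : 'M[algC]_n) : Prop :=
  exists lam : algC, jordan_sub lam W /\
    forall U : 'M[algC]_n, jordan_sub lam U -> \rank U = \rank W ->
      forall PU PW : 'M[algC]_n, is_P U PU -> is_P W PW -> (PU <= PW)%MS ->
        (PU == PW)%MS \/ (U == Fsub)%MS.

End Net.

(* Main.v *)
Require Import Defs.
From HB Require Import structures.
From mathcomp Require Import all_boot all_order all_algebra all_field.
From Stdlib Require Import Classical ClassicalEpsilon.
From mathcomp Require Import zify ring.
Import Order.TTheory GRing.Theory Num.Theory.
Local Open Scope ring_scope.

Set Implicit Arguments. Unset Strict Implicit. Unset Printing Implicit Defensive.

Definition pb (P : Prop) : bool :=
  if excluded_middle_informative P then true else false.
Lemma pbP (P : Prop) : reflect P (pb P).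
Proof. by rewrite /pb; case: excluded_middle_informative => H; constructor. Qed.

Section Main.
Variables (n' v : nat) (a : 'M[nat]_n'.+1).
Hypothesis Hreg : forall i : 'I_n'.+1, (\sum_(j < n'.+1) a i j)%N = v.
Local Notation n := n'.+1.
Local Notation A := (actA a).
Local Notation C := algC.

Definition one : 'rV[C]_n := const_mx 1.

Lemma oneA : one *m A = v%:R *: one.
Proof.
apply/rowP => j; rewrite !mxE.
rewrite (eq_bigr (fun i => (a j i)%:R)); last first.
  by move=> i _; rewrite !mxE mul1r.
by rewrite -natr_sum Hreg mulr1.
Qed.

Definition eqp (V : 'M[C]_n) (i j : 'I_n) : Prop :=
  forall x : 'rV[C]_n, (x <= V)%MS -> x 0 i = x 0 j.

Lemma memb_eqmx (M1 M2 : 'M[C]_n) :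
  (forall x : 'rV[C]_n, (x <= M1)%MS <-> (x <= M2)%MS) -> (M1 == M2)%MS.
Proof.
move=> H; apply/andP; split; apply/row_subP => i; apply/H; exact: row_sub.
Qed.

Definition pdB (R : rel 'I_n) (i : 'I_n) : 'M[C]_n :=
  \matrix_(l, j) (if R i j then ((l == i)%:R - (l == j)%:R) else 0).
Definition pdmx (R : rel 'I_n) : 'M[C]_n :=
  (\bigcap_(i : 'I_n) kermx (pdB R i))%MS.

Lemma sum_delta (x : 'rV[C]_n) i :
  \sum_l x 0 l * (l == i)%:R = x 0 i.
Proof.
rewrite (bigD1 i) //= eqxx mulr1 big1 ?addr0 // => l /negPf ->; by rewrite mulr0.
Qed.

Lemma pdB_row (R : rel 'I_n) i (x : 'rV[C]_n) j :
  (x *m pdB R i) 0 j = if R i j then x 0 i - x 0 j else 0.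
Proof.
rewrite !mxE.
under eq_bigr => l _ do rewrite mxE.
case: (R i j); last by rewrite big1 // => l _; rewrite mulr0.
under eq_bigr => l _ do rewrite mulrBr.
by rewrite sumrB !sum_delta.
Qed.

Lemma pdmxP (R : rel 'I_n) (x : 'rV[C]_n) :
  (x <= pdmx R)%MS <-> (forall i j, R i j -> x 0 i = x 0 j).
Proof.
split.
  move=> /sub_bigcapmxP H i j Rij; have /sub_kermxP := H i isT.
  move=> /rowP /(_ j); rewrite pdB_row Rij mxE => /eqP; rewrite subr_eq0 => /eqP //.
move=> H; apply/sub_bigcapmxP => i _; apply/sub_kermxP/rowP => j.
rewrite pdB_row mxE; case Rij: (R i j) => //.
by rewrite (H i j Rij) subrr.
Qed.

Lemma pdmx_polydiag (R : rel 'I_n) : is_polydiag (pdmx R).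
Proof. exists R => x; exact: pdmxP. Qed.

Lemma polydiag_ex (R : 'I_n -> 'I_n -> Prop) : exists D : 'M[C]_n,
  is_polydiag D /\ forall x : 'rV[C]_n, (x <= D)%MS <-> (forall i j, R i j -> x 0 i = x 0 j).
Proof.
exists (pdmx (fun i j => pb (R i j))); split; first exact: pdmx_polydiag.
move=> x; rewrite pdmxP; split => H i j Rij; apply: H => //.
  exact/pbP.
exact/pbP.
Qed.

Lemma P_memb (W PW : 'M[C]_n) : is_P W PW ->
  forall x : 'rV[C]_n, (x <= PW)%MS <-> (forall i j, eqp W i j -> x 0 i = x 0 j).
Proof.
case=> [[R HR] WP Pmin] x; split.
  have [D [pD HD]] := polydiag_ex (eqp W).
  have PD : (PW <= D)%MS.
    apply: Pmin pD _; apply/row_subP => r; apply/HD => i j; apply; exact: row_sub.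
  by move=> xP; apply/HD; apply: submx_trans PD.
move=> H; apply/HR => i j Rij; apply: H => y yW.
by move/(submx_trans yW)/HR: WP; apply.
Qed.


Lemma sync_stable (S : 'M[C]_n) (x : 'rV[C]_n) :
  is_sync a S -> (x <= S)%MS -> (x *m A <= S)%MS.
Proof. by case=> _ SA xS; apply: submx_trans SA; apply: submxMr. Qed.

Lemma polydiag_eqp (T : 'M[C]_n) : is_polydiag T ->
  forall x : 'rV[C]_n, (x <= T)%MS <-> (forall i j, eqp T i j -> x 0 i = x 0 j).
Proof.
case=> R HR x; split.
  by move=> xT i j H; exact: H x xT.
move=> H; apply/HR => i j Rij; apply: H => y /HR; apply; exact: Rij.
Qed.

Lemma closure_ex (V : 'M[C]_n) : exists S, smallest_sync a V S.
Proof.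
pose R i j := exists T, [/\ is_sync a T, (V <= T)%MS & eqp T i j].
have [D [pD HD]] := polydiag_ex R.
have DT : forall T, is_sync a T -> (V <= T)%MS -> (D <= T)%MS.
  move=> T sT VT; apply/row_subP => r.
  have [pT _] := sT; apply/(polydiag_eqp pT) => i j eTij.
  by move: (row_sub r D) => /HD; apply; exists T.
exists D; split.
- split => //; apply/row_subP => r; rewrite row_mul; apply/HD => i j [T [sT VT eT]].
  apply: eT; apply: (sync_stable sT); exact: submx_trans (row_sub r D) (DT T sT VT).
- apply/row_subP => r; apply/HD => i j [T [sT VT eT]].
  apply: eT; exact: submx_trans (row_sub r V) VT.
- exact: DT.
Qed.

Definition Nl (l : C) : 'M[C]_n := A - l%:M.
Definition cyc (l : C) (y : 'rV[C]_n) (k : nat) : 'M[C]_n :=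
  (\sum_(i < k) <<y *m Nl l ^+ i>>)%MS.
Definition jvec (l : C) (k : nat) (y : 'rV[C]_n) : Prop :=
  [/\ (0 < k)%N, y *m Nl l ^+ k = 0 & y *m Nl l ^+ k.-1 != 0].

Lemma mulmx_exprD (y : 'rV[C]_n) (M : 'M[C]_n) p q :
  y *m M ^+ (p + q) = y *m M ^+ p *m M ^+ q.
Proof. by rewrite exprD; exact: mulmxA. Qed.

Lemma mulmxXS (y : 'rV[C]_n) (M : 'M[C]_n) p : y *m M ^+ p *m M = y *m M ^+ p.+1.
Proof. by rewrite exprSr; exact: esym (mulmxA _ _ _). Qed.

Lemma yN_high l (y : 'rV[C]_n) k m :
  y *m Nl l ^+ k = 0 -> (k <= m)%N -> y *m Nl l ^+ m = 0.
Proof. by move=> yk km; rewrite -(subnKC km) mulmx_exprD yk mul0mx. Qed.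

Lemma cyc_gen l y k m : (m < k)%N -> (y *m Nl l ^+ m <= cyc l y k)%MS.
Proof.
move=> mk; apply: (sumsmx_sup (Ordinal mk)) => //; by rewrite genmxE /=.
Qed.

Lemma cyc_subP l y k m0 (X : 'M[C]_(m0, n)) :
  (cyc l y k <= X)%MS <-> (forall m, (m < k)%N -> (y *m Nl l ^+ m <= X)%MS).
Proof.
split.
  by move=> H m mk; apply: submx_trans H; apply: cyc_gen.
move=> H; apply/sumsmx_subP => i _; rewrite genmxE; exact: H.
Qed.

Lemma cyc_memb l y k (x : 'rV[C]_n) :
  (x <= cyc l y k)%MS <-> exists c : 'I_k -> C, x = \sum_i c i *: (y *m Nl l ^+ i).
Proof.
split.
  move=> /sub_sumsmxP [u Hu].
  have H i : exists ci, u i *m <<y *m Nl l ^+ i>>%MS = ci *: (y *m Nl l ^+ i).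
    have : (u i *m <<y *m Nl l ^+ i>>%MS <= y *m Nl l ^+ i)%MS.
      by rewrite -(genmxE (y *m Nl l ^+ i)) submxMl.
    by case/sub_rVP => ci ->; exists ci.
  exists (fun i => proj1_sig (constructive_indefinite_description _ (H i))).
  rewrite Hu; apply: eq_bigr => i _.
  exact: (proj2_sig (constructive_indefinite_description _ (H i))).
case=> c ->; apply: summx_sub => i _; apply: scalemx_sub; exact: cyc_gen.
Qed.

Lemma cyc_stab l y k (x : 'rV[C]_n) :
  y *m Nl l ^+ k = 0 -> (x <= cyc l y k)%MS -> (x *m Nl l <= cyc l y k)%MS.
Proof.
move=> yk /cyc_memb [c ->]; rewrite mulmx_suml; apply: summx_sub => i _.
rewrite -scalemxAl; apply: scalemx_sub.
rewrite -mulmxA; have -> : Nl l ^+ i *m Nl l = Nl l ^+ i.+1 by rewrite exprSr.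
case: (ltnP i.+1 k) => ik; first exact: cyc_gen.
by rewrite (yN_high yk ik) sub0mx.
Qed.

Lemma cyc_stabX l y k (x : 'rV[C]_n) m :
  y *m Nl l ^+ k = 0 -> (x <= cyc l y k)%MS -> (x *m Nl l ^+ m <= cyc l y k)%MS.
Proof.
move=> yk; elim: m x => [|m IH] x xc; first by rewrite expr0 mulmx1.
have -> : Nl l ^+ m.+1 = Nl l *m Nl l ^+ m by rewrite exprS.
rewrite mulmxA; apply: IH; exact: cyc_stab.
Qed.

Lemma sum_rev_cyc l y k (x : nat -> 'rV[C]_n) :
  (forall i, (i < k)%N -> x i = y *m Nl l ^+ (k.-1 - i)) ->
  (\sum_(i < k) <<x i>>)%MS = cyc l y k.
Proof.
move=> Hx; rewrite /cyc (reindex_inj rev_ord_inj) /=; apply: eq_bigr => i _.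
rewrite Hx; last by rewrite rev_ord_proof.
by congr (<<_ *m _>>)%MS; congr (_ ^+ _); case: i => i /= ik; lia.
Qed.

Lemma jvec_jordan l k y : jvec l k y -> jordan_sub a l (cyc l y k).
Proof.
case=> k0 yk yk1.
pose x i := y *m Nl l ^+ (k.-1 - i).
exists k, x; split; last by rewrite (@sum_rev_cyc l y k x) // submx_refl.
split => //.
- move=> i ik; apply: contraNneq yk1 => xi0.
  have -> : k.-1 = (k.-1 - i + i)%N by lia.
  by rewrite mulmx_exprD -/(x i) xi0 mul0mx.
- rewrite -/(Nl l) /x subn0 -[Nl l]expr1 -mulmx_exprD.
  have -> : (k.-1 + 1 = k)%N by lia.
  exact: yk.
- move=> i /andP [i0 ik]; rewrite -/(Nl l) /x -[Nl l]expr1 -mulmx_exprD.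
  by congr (_ *m _ ^+ _); lia.
Qed.

Lemma jordan_cyc l (U : 'M[C]_n) : jordan_sub a l U ->
  exists k y, jvec l k y /\ (U == cyc l y k)%MS.
Proof.
case=> k [x [[k0 xnz x0 xS] Ueq]].
pose y := x k.-1.
have Hd : forall d, (d <= k.-1)%N -> x (k.-1 - d)%N = y *m Nl l ^+ d.
  elim=> [|d IH] dk; first by rewrite subn0 expr0 mulmx1.
  have e : (k.-1 - d = (k.-1 - d.+1).+1)%N by lia.
  rewrite -(xS (k.-1 - d.+1).+1)%N /=; last by lia.
  rewrite -e IH; last by lia.
  by rewrite -/(Nl l) exprSr; exact: esym (mulmxA _ _ _).
have Hx : forall i, (i < k)%N -> x i = y *m Nl l ^+ (k.-1 - i).
  move=> i ik; rewrite -Hd; last by lia.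
  by congr (x _); lia.
exists k, y; split.
  split => //.
    have e : (k = k.-1 + 1)%N by lia.
    rewrite e mulmx_exprD expr1; have := Hd k.-1 (leqnn _); rewrite subnn => <-.
    exact: x0.
  have := Hd k.-1 (leqnn _); rewrite subnn => <-; exact: xnz.
by rewrite -(sum_rev_cyc Hx).
Qed.

Definition lin l (y : 'rV[C]_n) k (c : 'I_k -> C) : 'rV[C]_n :=
  \sum_(i < k) c i *: (y *m Nl l ^+ i).

Lemma linN l y k (c : 'I_k -> C) m :
  lin l y c *m Nl l ^+ m = \sum_(i < k) c i *: (y *m Nl l ^+ (i + m)).
Proof.
rewrite /lin mulmx_suml; apply: eq_bigr => i _; by rewrite -scalemxAl mulmx_exprD.
Qed.

Lemma lin_low l y k (c : 'I_k -> C) (i0 : 'I_k) :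
  y *m Nl l ^+ k = 0 -> (forall i : 'I_k, (i < i0)%N -> c i = 0) ->
  lin l y c *m Nl l ^+ (k.-1 - i0) = c i0 *: (y *m Nl l ^+ k.-1).
Proof.
move=> yk low; rewrite linN (bigD1 i0) //=.
have -> : (i0 + (k.-1 - i0) = k.-1)%N by have := ltn_ord i0; lia.
rewrite big1 ?addr0 // => i ne.
case: (ltnP i i0) => ii0; first by rewrite low // scale0r.
have : (i0 < i)%N by rewrite ltn_neqAle ii0 andbT eq_sym; apply: ne.
move=> lt; rewrite (yN_high yk) ?scaler0 //.
by have := ltn_ord i0; lia.
Qed.

Lemma min_idx k (c : 'I_k -> C) : (exists i, c i != 0) ->
  exists i0 : 'I_k, c i0 != 0 /\ forall i : 'I_k, (i < i0)%N -> c i = 0.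
Proof.
move=> [i ci].
have ex : exists m, [exists j : 'I_k, (val j == m) && (c j != 0)].
  by exists (val i); apply/existsP; exists i; rewrite eqxx ci.
case: (ex_minnP ex) => m /existsP [j /andP [/eqP jm cj]] mmin.
exists j; split => // i' lt; apply/eqP; apply/negPn/negP => ci'.
suff : (val j <= val i')%N by rewrite leqNgt lt.
rewrite jm; apply: mmin; apply/existsP; by exists i'; rewrite eqxx ci'.
Qed.

Lemma rank_cyc l k y : jvec l k y -> \rank (cyc l y k) = k.
Proof.
case=> k0 yk yk1.
pose Y : 'M[C]_(k, n) := \matrix_(i < k) (y *m Nl l ^+ i).
have eY : (cyc l y k == Y)%MS.
  apply/andP; split.
    apply/cyc_subP => m mk; have := row_sub (Ordinal mk) Y; by rewrite rowK.
  apply/row_subP => i; rewrite rowK; exact: cyc_gen.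
rewrite (eqmx_rank eY); apply/eqP; rewrite -/(row_free Y) -kermx_eq0.
apply/rowV0P => c /sub_kermxP cY; apply/eqP; apply/negPn/negP => cnz.
have [i0 [ci0 low]] : exists i0 : 'I_k, c 0 i0 != 0 /\ forall i : 'I_k, (i < i0)%N -> c 0 i = 0.
  apply: (min_idx (c := fun i => c 0 i)).
  apply: NNPP => H; move/negP: cnz; apply; apply/eqP/rowP => i; rewrite mxE.
  apply/eqP; apply: NNPP => ci; apply: H; exists i; exact/negP.
have eq : lin l y (fun i => c 0 i) = c *m Y.
  by rewrite mulmx_sum_row /lin; apply: eq_bigr => i _; rewrite rowK.
have := lin_low (c := fun i => c 0 i) yk low.
by rewrite eq cY mul0mx => /esym /eqP; rewrite scaler_eq0 (negPf ci0) (negPf yk1).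
Qed.

Lemma lin_entry l y k (c : 'I_k -> C) m (i : 'I_n) :
  (lin l y c *m Nl l ^+ m) 0 i = \sum_(p < k) c p * (y *m Nl l ^+ (p + m)) 0 i.
Proof. by rewrite linN summxE; apply: eq_bigr => p _; rewrite mxE. Qed.

Lemma nonzero_row k (c : 'rV[C]_k) : c != 0 -> exists i, c 0 i != 0.
Proof.
move=> cnz; apply: NNPP => H; move/negP: cnz; apply; apply/eqP/rowP => i; rewrite mxE.
apply/eqP; apply: NNPP => ci; apply: H; exists i; exact/negP.
Qed.

Lemma scale_entry (u : C) (w : 'rV[C]_n) p : (u *: w) 0 p = u * w 0 p.
Proof. by rewrite mxE. Qed.

Lemma solve_lin l k y (i j : 'I_n) : jvec l k y ->
  (y *m Nl l ^+ k.-1) 0 i != (y *m Nl l ^+ k.-1) 0 j ->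
  forall s : 'I_k -> C, exists c : 'I_k -> C, forall m : 'I_k,
    (lin l y c *m Nl l ^+ m) 0 i - (lin l y c *m Nl l ^+ m) 0 j = s m.
Proof.
case=> k0 yk yk1 eij s.
pose d p := (y *m Nl l ^+ p) 0 i - (y *m Nl l ^+ p) 0 j.
pose Phi : 'M[C]_k := \matrix_(p < k, m < k) d (p + m)%N.
have key : forall (c : 'rV[C]_k) (m : 'I_k), (c *m Phi) 0 m =
   (lin l y (fun p => c 0 p) *m Nl l ^+ m) 0 i - (lin l y (fun p => c 0 p) *m Nl l ^+ m) 0 j.
  move=> c m; rewrite !lin_entry -sumrB mxE; apply: eq_bigr => p _.
  by rewrite mxE /d mulrBr.
have uPhi : Phi \in unitmx.
  rewrite -row_free_unit -kermx_eq0; apply/rowV0P => c /sub_kermxP cP.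
  apply/eqP; apply/negPn/negP => cnz.
  have [i0 [ci0 low]] := min_idx (nonzero_row cnz).
  have ltk : (k.-1 - i0 < k)%N by clear -k0; lia.
  have := key c (Ordinal ltk); rewrite cP mxE /= (lin_low (c := fun p => c 0 p)) //.
  rewrite !scale_entry -mulrBr => /esym /eqP; rewrite mulf_eq0 (negPf ci0) subr_eq0 /=.
  by rewrite (negPf eij).
exists (fun p => ((\row_m s m) *m invmx Phi) 0 p) => m.
by rewrite -key mulmxKV // mxE.
Qed.

Lemma ss_eqmx (V V' S : 'M[C]_n) :
  (V == V')%MS -> smallest_sync a V S -> smallest_sync a V' S.
Proof.
move=> /andP [VV' V'V] [sS VS Smin]; split => //.
  exact: submx_trans V'V VS.
move=> T sT V'T; apply: Smin sT _; exact: submx_trans VV' V'T.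
Qed.

Lemma ss_eqS (V S S' : 'M[C]_n) : is_sync a S' ->
  (S == S')%MS -> smallest_sync a V S -> smallest_sync a V S'.
Proof.
move=> sS' /andP [SS' S'S] [sS VS Smin]; split => //.
  exact: submx_trans VS SS'.
move=> T sT VT; apply: submx_trans S'S _; exact: Smin.
Qed.

Lemma polydiag_one (T : 'M[C]_n) : is_polydiag T -> (one <= T)%MS.
Proof. by case=> R HR; apply/HR => i j _; rewrite !mxE. Qed.

Lemma sub_cycV l y k (X : 'M[C]_n) (x : 'rV[C]_n) :
  (cyc l y k <= X)%MS -> (x <= cyc l y k)%MS -> (x <= X)%MS.
Proof. by move=> cX xc; apply: submx_trans xc cX. Qed.

Definition relb l k (y : 'rV[C]_n) (i j : 'I_n) : bool :=
  [forall m : 'I_k, (y *m Nl l ^+ m) 0 i == (y *m Nl l ^+ m) 0 j].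

Lemma relbP l k y i j :
  reflect (forall m, (m < k)%N -> (y *m Nl l ^+ m) 0 i = (y *m Nl l ^+ m) 0 j)
          (relb l k y i j).
Proof.
apply: (iffP forallP) => H.
  by move=> m mk; apply/eqP; exact: (H (Ordinal mk)).
by move=> m; apply/eqP; apply: H.
Qed.

Lemma eqp_cyc l k y i j : eqp (cyc l y k) i j <-> relb l k y i j.
Proof.
split.
  by move=> H; apply/relbP => m mk; apply: H; apply: cyc_gen.
move=> /relbP H x /cyc_memb [c ->]; rewrite !summxE; apply: eq_bigr => m _.
by rewrite !scale_entry H.
Qed.

Definition cnt l k y := #|[set p : 'I_n * 'I_n | relb l k y p.1 p.2]|.

Lemma cnt_eq l k y z :
  (forall i j, relb l k y i j -> relb l k z i j) -> (cnt l k z <= cnt l k y)%N ->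
  forall i j, relb l k z i j -> relb l k y i j.
Proof.
move=> yz le i j zij.
have sub : [set p : 'I_n * 'I_n | relb l k y p.1 p.2] \subset
           [set p : 'I_n * 'I_n | relb l k z p.1 p.2].
  by apply/subsetP => p; rewrite !inE; apply: yz.
have := subset_leqif_card sub; case => _ /esym.
have -> : #|[set p : 'I_n * 'I_n | relb l k y p.1 p.2]| ==
          #|[set p : 'I_n * 'I_n | relb l k z p.1 p.2]|.
  by rewrite eqn_leq le andbT; apply: subset_leq_card.
move=> /subsetP /(_ (i, j)); rewrite !inE /=; exact.
Qed.

Lemma ex_max (f : 'I_n -> C) : (forall i, f i \is Num.real) ->
  exists j, forall i, f i <= f j.
Proof.
move=> fr.
have H : forall s : seq 'I_n, exists j, forall i, i \in s -> f i <= f j.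
  elim=> [|x s [j Hj]]; first by exists ord0.
  case/orP: (real_leVge (fr x) (fr j)) => le.
    exists j => i; rewrite inE => /orP [/eqP -> //|]; exact: Hj.
  exists x => i; rewrite inE => /orP [/eqP -> //|iS].
  exact: le_trans (Hj i iS) le.
have [j Hj] := H (enum 'I_n); exists j => i; apply: Hj; by rewrite mem_enum.
Qed.

Lemma A_entry i j : A i j = (a j i)%:R.
Proof. by rewrite !mxE. Qed.

Lemma noJordan (w : 'rV[C]_n) (c : C) : w *m (A - (v%:R)%:M) = c *: one -> c = 0.
Proof.
move=> H; apply/eqP; apply/negPn/negP => cnz.
pose r j := 'Re (w 0 j / c).
have Re1 : 'Re (1 : C) = 1 by apply/Creal_ReP; exact: real1.
have eq j : \sum_i (a j i)%:R * r i - v%:R * r j = 1.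
  have e1 : \sum_i w 0 i * (a j i)%:R - v%:R * w 0 j = c.
    have := congr1 (fun M : 'rV[C]_n => M 0 j) H.
    rewrite /= mulmxBr mul_mx_scalar !mxE mulr1 => <-.
    by congr (_ - _); apply: eq_bigr => i _; rewrite !mxE.
  have := congr1 (fun z => 'Re (z / c)) e1; rewrite /= divff // Re1 => E; apply: eq_trans E; symmetry.
  rewrite mulrBl raddfB /= mulr_suml raddf_sum /=; congr (_ - _).
    apply: eq_bigr => i _; rewrite mulrAC ReMr ?realn //.
    by rewrite mulrC.
  by rewrite -mulrA ReMl ?realn.
have [j0 jmax] := ex_max (fun j => Creal_Re (w 0 j / c)).
have := eq j0.
have le : \sum_i (a j0 i)%:R * r i <= \sum_i (a j0 i)%:R * r j0.
  by apply: ler_sum => i _; apply: ler_wpM2l => //; apply: jmax.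
rewrite -mulr_suml -natr_sum Hreg in le.
move=> e; have : 1 <= 0 :> C.
  by rewrite -e subr_le0.
by rewrite ler10.
Qed.

Definition Q (S : 'M[C]_n) l k y :=
  [/\ y *m Nl l ^+ k = 0, y != 0 & smallest_sync a (cyc l y k) S].

Lemma cyc_eq_drop l y k : y *m Nl l ^+ k = 0 -> (cyc l y k.+1 == cyc l y k)%MS.
Proof.
move=> yk; rewrite /cyc big_ord_recr /= yk genmx0.
by apply/eqmxP; apply: addsmx0.
Qed.

Lemma Qjvec S l k y : Q S l k y ->
  (forall l' k' y', Q S l' k' y' -> (k <= k')%N) -> jvec l k y.
Proof.
case: k => [|k] [yk ynz ss] kmin.
  by move: ynz; rewrite -yk expr0 mulmx1 eqxx.
split => //=; apply/negP => /eqP yk1.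
have : Q S l k y.
  split => //; apply: ss_eqmx ss; exact: cyc_eq_drop.
by move/kmin; rewrite ltnn.
Qed.

Lemma JI_join (S V1 V2 : 'M[C]_n) : join_irreducible a S ->
  smallest_sync a (V1 + V2)%MS S -> smallest_sync a V1 S \/ smallest_sync a V2 S.
Proof.
move=> [sS0 nJ] [sS VS Smin].
have [S1 [s1 V1S1 m1]] := closure_ex V1.
have [S2 [s2 V2S2 m2]] := closure_ex V2.
have S1S : (S1 <= S)%MS by apply: m1 sS _; apply: submx_trans VS; apply: addsmxSl.
have S2S : (S2 <= S)%MS by apply: m2 sS _; apply: submx_trans VS; apply: addsmxSr.
have ss12 : smallest_sync a (S1 + S2)%MS S.
  split => //; first by rewrite addsmx_sub S1S S2S.
  move=> T sT HT; apply: Smin sT _; apply: submx_trans HT.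
  by apply: addsmxS.
case: (boolP (S1 == S)%MS) => e1.
  left; apply: (ss_eqS sS e1); split => //.
case: (boolP (S2 == S)%MS) => e2.
  right; apply: (ss_eqS sS e2); split => //.
by exfalso; apply: nJ; exists S1, S2; split.
Qed.

Lemma eqp_eqmx (U U' : 'M[C]_n) i j : (U == U')%MS -> eqp U i j <-> eqp U' i j.
Proof.
move=> /andP [UU' U'U]; split => H x xU.
  by apply: H; apply: submx_trans xU U'U.
by apply: H; apply: submx_trans xU UU'.
Qed.

Lemma lin_sub l y k (c : 'I_k -> C) : (lin l y c <= cyc l y k)%MS.
Proof. by apply/cyc_memb; exists c. Qed.

Lemma lin_high l y k (c : 'I_k -> C) : y *m Nl l ^+ k = 0 -> lin l y c *m Nl l ^+ k = 0.
Proof.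
move=> yk; rewrite linN big1 // => i _; rewrite (yN_high yk) ?scaler0 //; exact: leq_addl.
Qed.

Lemma sub_diff (X : 'M[C]_n) (x y : 'rV[C]_n) : (x <= X)%MS -> (y <= X)%MS -> (x - y <= X)%MS.
Proof. by move=> xX yX; apply: addmx_sub => //; rewrite -scaleN1r scalemx_sub. Qed.

Lemma add_entry (x w : 'rV[C]_n) p : (x + w) 0 p = x 0 p + w 0 p.
Proof. by rewrite mxE. Qed.

Lemma core S l k y : join_irreducible a S -> Q S l k y ->
  (forall l' k' y', Q S l' k' y' -> (k <= k')%N) ->
  (forall y', Q S l k y' -> (cnt l k y' <= cnt l k y)%N) ->
  special_jordan a (cyc l y k).
Proof.
move=> JI Qy kmin cmax.
have jy := Qjvec Qy kmin; case: (jy) => k0 yk yk1; case: (Qy) => _ ynz ssW.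
have [sS WS Smin] := ssW.
exists l; split; first exact: jvec_jordan.
move=> U jU rkU PU PW HPU HPW PUW.
have [k' [y' [jy' Ueq]]] := jordan_cyc jU.
have kk : k' = k by rewrite -(rank_cyc jy') -(eqmx_rank Ueq) rkU rank_cyc.
subst k'; case: (jy') => _ yk' yk1'.
have [UU' U'U] := andP Ueq.
have UPU : (U <= PU)%MS by case: HPU.
have E1 : forall i j, relb l k y i j -> relb l k y' i j.
  move=> i j /eqp_cyc HW; apply/eqp_cyc => x xU'.
  have xPU : (x <= PU)%MS by apply: submx_trans UPU; apply: submx_trans U'U.
  exact: ((P_memb HPW x).1 (submx_trans xPU PUW) i j HW).
have PWS : (PW <= S)%MS by case: HPW => _ _ Pmin; apply: Pmin WS; case: sS.
have US : (U <= S)%MS by apply: submx_trans PWS; apply: submx_trans PUW.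
have U'S : (cyc l y' k <= S)%MS by apply: submx_trans US.
case: (classic (smallest_sync a U S)) => [ssU | nssU].
  left.
  have Qy' : Q S l k y'.
    split => //; last by apply: ss_eqmx ssU.
    by apply: contraNneq yk1' => ->; rewrite mul0mx.
  have E2 := cnt_eq E1 (cmax _ Qy').
  apply: memb_eqmx => x; rewrite (P_memb HPU) (P_memb HPW).
  have eqv : forall i j, eqp U i j <-> eqp (cyc l y k) i j.
    move=> i j; rewrite (eqp_eqmx i j Ueq) !eqp_cyc; split; [exact: E2|exact: E1].
  by split => H i j /eqv; apply: H.
right.
have linU' : forall (c : 'I_k -> C) m, (lin l y' c *m Nl l ^+ m <= cyc l y' k)%MS.
  by move=> c m; apply: cyc_stabX => //; exact: lin_sub.
have Hz : forall c : 'I_k -> C, Q S l k (y + lin l y' c).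
  move=> c; set z := y + lin l y' c.
  have zN : forall m, z *m Nl l ^+ m = y *m Nl l ^+ m + lin l y' c *m Nl l ^+ m.
    by move=> m; rewrite mulmxDl.
  split.
  - by rewrite zN yk lin_high // addr0.
  - apply/negP => /eqP z0.
    have WU' : (cyc l y k <= cyc l y' k)%MS.
      apply/cyc_subP => m mk.
      have -> : y *m Nl l ^+ m = - (lin l y' c *m Nl l ^+ m).
        by apply/eqP; rewrite -addr_eq0 -zN z0 mul0mx.
      rewrite -scaleN1r; apply: scalemx_sub; exact: linU'.
    have eWU' : (cyc l y k == cyc l y' k)%MS.
      by rewrite -(mxrank_leqif_eq WU').2 (rank_cyc jy) (rank_cyc jy').
    apply: (nssU); apply: ss_eqmx ssW; apply/andP; split.
      exact: submx_trans WU' U'U.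
    by apply: submx_trans UU' _; case/andP: eWU'.
  - have ssZ : smallest_sync a (cyc l z k + U)%MS S.
      split => //.
      + rewrite addsmx_sub US andbT; apply/cyc_subP => m mk; rewrite zN; apply: addmx_sub.
          apply: submx_trans WS; exact: cyc_gen.
        apply: submx_trans U'S; exact: linU'.
      + move=> T sT HT; apply: Smin sT _; apply/cyc_subP => m mk.
        have -> : y *m Nl l ^+ m = z *m Nl l ^+ m - lin l y' c *m Nl l ^+ m.
          by rewrite zN addrK.
        apply: sub_diff.
          apply: submx_trans HT; apply: submx_trans (addsmxSl _ U); exact: cyc_gen.
        apply: submx_trans HT; apply: submx_trans (addsmxSr (cyc l z k) _).
        apply: submx_trans U'U; exact: linU'.
    by case: (JI_join JI ssZ) => // /nssU.
have Hrel : forall (c : 'I_k -> C) i j, relb l k (y + lin l y' c) i j -> relb l k y i j.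
  move=> c; apply: (@cnt_eq l k y (y + lin l y' c)); last exact: cmax (Hz c).
  move=> i j Ry; have Ry' := E1 _ _ Ry.
  have eU' := (eqp_cyc l k y' i j).2 Ry'.
  move/relbP: (Ry) => Ry2; apply/relbP => m mk; rewrite mulmxDl !add_entry (Ry2 m mk).
  congr (_ + _); apply: eU'; exact: linU'.
have econst : forall i j, (y' *m Nl l ^+ k.-1) 0 i = (y' *m Nl l ^+ k.-1) 0 j.
  move=> i j; apply: NNPP => ne.
  have ne' : (y' *m Nl l ^+ k.-1) 0 i != (y' *m Nl l ^+ k.-1) 0 j by apply/eqP.
  have [c Hc] := solve_lin jy' ne' (fun m => - ((y *m Nl l ^+ m) 0 i - (y *m Nl l ^+ m) 0 j)).
  have : relb l k (y + lin l y' c) i j.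
    apply/relbP => m mk; have := Hc (Ordinal mk); rewrite /= mulmxDl !add_entry => E.
    apply/eqP; rewrite -subr_eq0; apply/eqP.
    transitivity (((y *m Nl l ^+ m) 0 i - (y *m Nl l ^+ m) 0 j) +
      ((lin l y' c *m Nl l ^+ m) 0 i - (lin l y' c *m Nl l ^+ m) 0 j)); first by ring.
    by rewrite E subrr.
  move/Hrel/E1/relbP => H; apply: ne; apply: H; by rewrite ltn_predL.
pose e := y' *m Nl l ^+ k.-1.
have ec : e = e 0 0 *: one.
  by apply/rowP => j; rewrite scale_entry [one 0 j]mxE mulr1 /e (econst j 0).
have e00 : e 0 0 != 0.
  by apply: contraNneq yk1' => e0; rewrite -/e ec e0 scale0r.
case: (ltnP 1 k) => k1.
  exfalso.
  pose w := y' *m Nl l ^+ k.-2.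
  have we : w *m Nl l = e.
    rewrite /w /e mulmxXS; apply: (congr1 (fun p => y' *m Nl l ^+ p)); by clear -k1; lia.
  have eN : e *m Nl l = 0.
    rewrite /e mulmxXS -yk'; apply: (congr1 (fun p => y' *m Nl l ^+ p)); by clear -k0; lia.
  have oneN : one *m Nl l = 0.
    move: eN; rewrite ec -scalemxAl => /eqP; rewrite scalemx_eq0 (negPf e00) /=.
    by move/eqP.
  have lv : l = v%:R.
    move: oneN; rewrite /Nl mulmxBr oneA mul_mx_scalar -scalerBl => /rowP /(_ 0).
    rewrite !mxE mulr1 => /eqP; rewrite subr_eq0 => /eqP; done.
  have := noJordan (w := w) (c := e 0 0); rewrite -lv -/(Nl l) we -ec => /(_ erefl).
  by move/eqP; rewrite (negPf e00).
have k1' : k = 1%N by clear -k0 k1; lia.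
subst k.
have cy : (cyc l y' 1 :=: y')%MS.
  by rewrite /cyc big_ord1 expr0 mulmx1; exact: genmxE.
have ye : y' = e 0 0 *: one by rewrite -ec /e /= expr0 mulmx1.
have yone : (y' :=: one)%MS by rewrite ye; apply: eqmx_scale.
rewrite /Fsub; apply/andP; split.
  by rewrite genmxE -yone -cy.
by rewrite genmxE -yone -cy.
Qed.

Lemma kerchar_full m (g : 'M[C]_m) : (1%:M <= kermxpoly g (char_poly g))%MS.
Proof.
case: m g => [|m] g; first by rewrite thinmx0 sub0mx.
by rewrite (kermxpoly_min (mxminpoly_dvd_char g)).
Qed.

Lemma kermxpolyA_ker (x : 'rV[C]_n) l m :
  (x <= kermxpoly A (('X - l%:P) ^+ m))%MS -> x *m Nl l ^+ m = 0.
Proof.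
rewrite /kermxpoly rmorphXn /= rmorphB /= horner_mx_X horner_mx_C.
by move/sub_kermxP.
Qed.

Lemma char_split m (g : 'M[C]_m) : exists d (lam : 'I_d -> C) (mu : 'I_d -> nat),
  char_poly g = \prod_(i < d) ('X - (lam i)%:P) ^+ mu i /\
  {in predT &, forall i j, j != i -> coprimep (('X - (lam i)%:P) ^+ mu i) (('X - (lam j)%:P) ^+ mu j)}.
Proof.
have [rs Hrs] := closed_field_poly_normal (char_poly g).
rewrite (monicP (char_poly_monic g)) scale1r in Hrs.
pose ds := undup rs.
exists (size ds), (fun i => nth 0 ds i), (fun i => count_mem (nth 0 ds i) rs); split.
  rewrite Hrs -big_undup_iterop_count (big_nth 0) big_mkord.
  by apply: eq_bigr.
move=> i j _ _ ji.
rewrite coprimep_expl // coprimep_expr // coprimep_XsubC root_XsubC.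
by rewrite nth_uniq ?undup_uniq // eq_sym.
Qed.

Lemma gen_decomp (S : 'M[C]_n) : (S *m A <= S)%MS -> exists d (lam : 'I_d -> C) (mu : 'I_d -> nat),
   forall x : 'rV[C]_n, (x <= S)%MS -> exists gx : 'I_d -> 'rV[C]_n,
     x = \sum_i gx i /\ forall i, (gx i <= S)%MS /\ gx i *m Nl (lam i) ^+ mu i = 0.
Proof.
move=> SA.
pose V := row_base S.
have sV : stablemx V A by rewrite stablemx_row_base.
have fV := row_base_free S.
pose g := conjmx V A.
have [d [lam [mu [cp cop]]]] := char_split g.
exists d, lam, mu => x xS.
have : (x <= V)%MS by rewrite eq_row_base.
case/submxP => w xw.
have : (w <= \sum_(i < d) kermxpoly g (('X - (lam i)%:P) ^+ mu i))%MS.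
  rewrite -(@kermxpoly_prod _ _ g _ predT (fun i => ('X - (lam i)%:P) ^+ mu i) cop).
  by rewrite -cp; apply: submx_trans (submx1 w) (kerchar_full g).
case/sub_sumsmxP => u wu.
exists (fun i => u i *m kermxpoly g (('X - (lam i)%:P) ^+ mu i) *m V); split.
  by rewrite xw wu mulmx_suml.
move=> i; split.
  by rewrite -(eq_row_base S) submxMl.
apply: kermxpolyA_ker; rewrite -sub_kermxpoly_conjmx //; exact: submxMl.
Qed.

Lemma sync_stableN (S : 'M[C]_n) (x : 'rV[C]_n) l m :
  is_sync a S -> (x <= S)%MS -> (x *m Nl l ^+ m <= S)%MS.
Proof.
move=> sS; elim: m x => [|m IH] x xS; first by rewrite expr0 mulmx1.
have -> : Nl l ^+ m.+1 = Nl l *m Nl l ^+ m by rewrite exprS.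
rewrite mulmxA; apply: IH; rewrite /Nl mulmxBr mul_mx_scalar.
apply: sub_diff; first exact: sync_stable.
exact: scalemx_sub.
Qed.

Lemma JI_list S (T : Type) (s : seq T) (F : T -> 'M[C]_n) : join_irreducible a S ->
  smallest_sync a (\sum_(t <- s) F t)%MS S ->
  (exists t, smallest_sync a (F t) S) \/ smallest_sync a 0 S.
Proof.
move=> JI; elim: s => [|t s IH]; first by rewrite big_nil; right.
rewrite big_cons => /(JI_join JI) [H|H]; first by left; exists t.
exact: IH.
Qed.

Lemma Q_one S : is_sync a S -> smallest_sync a 0 S -> Q S v%:R 1 one.
Proof.
move=> sS [_ _ m0]; split.
- by rewrite expr1 /Nl mulmxBr oneA mul_mx_scalar subrr.
- by apply/negP => /eqP /rowP /(_ ord0); rewrite !mxE => /eqP; rewrite oner_eq0.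
- split => //.
    by rewrite /cyc big_ord1 expr0 mulmx1 genmxE; apply: polydiag_one; case: sS.
  by move=> T sT _; apply: m0 sT (sub0mx _ _).
Qed.

Lemma exists_Q S : join_irreducible a S -> exists l k y, Q S l k y.
Proof.
move=> JI; have sS := JI.1; have [_ SA] := sS.
have [d [lam [mu Hd]]] := gen_decomp SA.
have Hr : forall r : 'I_n, exists gx : 'I_d -> 'rV[C]_n,
     row r S = \sum_i gx i /\ forall i, (gx i <= S)%MS /\ gx i *m Nl (lam i) ^+ mu i = 0.
  by move=> r; apply: Hd; exact: row_sub.
pose G r := proj1_sig (constructive_indefinite_description _ (Hr r)).
have HG : forall r, row r S = \sum_i G r i /\ forall i, (G r i <= S)%MS /\ G r i *m Nl (lam i) ^+ mu i = 0.
  by move=> r; exact: (proj2_sig (constructive_indefinite_description _ (Hr r))).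
pose F (p : 'I_n * 'I_d) := cyc (lam p.2) (G p.1 p.2) (mu p.2).
have ssF : smallest_sync a (\sum_(p : 'I_n * 'I_d) F p)%MS S.
  split => //.
    apply/sumsmx_subP => p _; apply/cyc_subP => m _; apply: sync_stableN => //.
    by case: (HG p.1) => _ /(_ p.2) [].
  move=> T sT HT; apply/row_subP => r; case: (HG r) => -> H.
  apply: summx_sub => i _; apply: submx_trans HT.
  apply: (sumsmx_sup (r, i)) => //.
  rewrite /F /=; case: (H i) => _ gk.
  case e : (mu i) => [|k].
    by move: gk; rewrite e expr0 mulmx1 => ->; rewrite sub0mx.
  by have := @cyc_gen (lam i) (G r i) k.+1 0 erefl; rewrite expr0 mulmx1.
case: (JI_list JI ssF) => [[[r i] ssp]|ss0]; last by exists v%:R, 1%N, one; exact: Q_one.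
case: (HG r) => _ /(_ i) [_ gk].
case: (eqVneq (G r i) 0) => g0.
  exists v%:R, 1%N, one; apply: Q_one => //; apply: ss_eqmx ssp.
  apply/andP; split; last exact: sub0mx.
  by apply/cyc_subP => m _; rewrite /= g0 mul0mx sub0mx.
by exists (lam i), (mu i), (G r i); split.
Qed.

Lemma nat_min (P : nat -> Prop) : (exists k, P k) ->
  exists k, P k /\ forall k', P k' -> (k <= k')%N.
Proof.
case=> k Pk; elim/ltn_ind: k Pk => k IH Pk.
case: (classic (exists k', P k' /\ (k' < k)%N)) => [[k' [Pk' lt]]|H].
  exact: IH lt Pk'.
exists k; split => // k' Pk'; rewrite leqNgt; apply/negP => lt; apply: H; by exists k'.
Qed.

Lemma cnt_le l k y : (cnt l k y <= n * n)%N.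
Proof.
rewrite /cnt; apply: leq_trans (max_card _) _; by rewrite card_prod card_ord.
Qed.

Lemma special_exists S : join_irreducible a S ->
  exists W, special_jordan a W /\ smallest_sync a W S.
Proof.
move=> JI.
have ex : exists k l y, Q S l k y.
  by have [l [k [y Qy]]] := exists_Q JI; exists k, l, y.
have [k0 [[l0 [y1 Q1]] kmin]] := nat_min ex.
have [m0 [[y0 [Q0 e0]] mmin]] :=
  nat_min (P := fun m => exists y, Q S l0 k0 y /\ (n * n - cnt l0 k0 y)%N = m)
    (ex_intro _ _ (ex_intro _ y1 (conj Q1 erefl))).
exists (cyc l0 y0 k0); split; last by case: Q0.
apply: core JI Q0 _ _.
  by move=> l' k' y' Q'; apply: kmin; exists l', y'.
move=> y' Q'; have := mmin _ (ex_intro _ y' (conj Q' erefl)); rewrite -e0.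
have := cnt_le l0 k0 y'; have := cnt_le l0 k0 y0.
move: (cnt l0 k0 y') (cnt l0 k0 y0) => p q; clear; lia.
Qed.

Lemma ss_unique (W1 W2 S1 S2 : 'M[C]_n) : (W1 == W2)%MS ->
  smallest_sync a W1 S1 -> smallest_sync a W2 S2 -> (S1 == S2)%MS.
Proof.
move=> /andP [e12 e21] [s1 W1S1 m1] [s2 W2S2 m2]; apply/andP; split.
  by apply: m1 s2 _; apply: submx_trans W2S2.
by apply: m2 s1 _; apply: submx_trans W1S1.
Qed.

End Main.

Unset Implicit Arguments.

Theorem mainTheorem10 (n v : nat) (a : 'M[nat]_n) (Hn : (0 < n)%N)
    (Hreg : forall i : 'I_n, (\sum_(j < n) a i j)%N = v) :
  (forall S : 'M[algC]_n, join_irreducible a S ->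
     exists W : 'M[algC]_n, special_jordan a W /\ smallest_sync a W S) /\
  (exists f : 'M[algC]_n -> 'M[algC]_n,
     (forall S, join_irreducible a S -> special_jordan a (f S)) /\
     (forall S1 S2, join_irreducible a S1 -> join_irreducible a S2 ->
        (f S1 == f S2)%MS -> (S1 == S2)%MS)).
Proof.
move: Hreg Hn; move: a; case: n => [|n'] a Hreg Hn //.
have SE := @special_exists n' v a Hreg.
split; first exact: SE.
pose f S := match excluded_middle_informative (join_irreducible a S) with
  | left H => proj1_sig (constructive_indefinite_description _ (SE S H))
  | right _ => S end.
exists f; split.
  move=> S JI; rewrite /f; case: excluded_middle_informative => // H.
  by case: constructive_indefinite_description => W [].
move=> S1 S2 J1 J2; rewrite /f.
case: excluded_middle_informative => // H1; case: excluded_middle_informative => // H2.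
move: (proj2_sig (constructive_indefinite_description _ (SE S1 H1))) => [_ ss1].
move: (proj2_sig (constructive_indefinite_description _ (SE S2 H2))) => [_ ss2] e.
exact: ss_unique e ss1 ss2.
Qed.
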